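(* Let $G=(V,E)$ be a $k$-edge-connected graph, $F\subseteq E$, and let $S_1,\dots,S_\ell$ be a natural decomposition of $(V,F)$ into $k/4$-edge-connected components. Let $I\subseteq[\ell]$ be such that $S_I:=\bigcup_{i\in I}S_i$ satisfies $\emptyset\ne S_I\subsetneq V$. If $d_F(S_I)\ge \frac78 d(S_I)$ and $\phi(S_I)<1/8$, then $$\frac{\partial(S_I)}{\sum_{i\in I}\partial(S_i)}\ \ge\ 2\phi(S_I).$$
   Context: Graphs are finite, undirected, unweighted, loopless, possibly with parallel edges; $k$-edge-connected means every cut $(S,\overline S)$, $\emptyset\ne S\subsetneq V$, has at least $k$ edges. For $S\subseteq V$: $\partial(S)$ is the number of edges of $G$ with exactly one endpoint in $S$, $d(S)$ is the sum of $G$-degrees of vertices of $S$, $d_F(S)$ is the sum over $v\in S$ of the number of edges of $F$ incident to $v$, and $\phi(S)=\partial(S)/d(S)$. A natural decomposition of a graph $H=(V,F)$ into $r$-edge-connected components is obtained as follows: start with the partition $\{V\}$; while some part $P$ is such that the induced graph $H[P]$ is not $r$-edge-connected, choose a partition $(P_1,P_2)$ of $P$ into nonempty sets with fewer than $r$ edges of $H[P]$ between $P_1$ and $P_2$, and replace $P$ by $P_1,P_2$; the final parts are $S_1,\dots,S_\ell$. *)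

(* Defs.v *)
(* A multigraph G = (V, E): V, E finite types, each edge e
   has endpoints ea e, eb e with ea e != eb e (loopless; parallel edges allowed). *)
From HB Require Import structures.
From mathcomp Require Import all_boot all_order all_algebra.
Set Implicit Arguments. Unset Strict Implicit. Unset Printing Implicit Defensive.
Import Order.TTheory GRing.Theory Num.Theory.

Section Graph.
Variables (V E : finType) (ea eb : E -> V).

Definition incident (v : V) (e : E) : bool := (ea e == v) || (eb e == v).

Definition bdry (S : {set V}) : nat :=
  #|[set e : E | (ea e \in S) != (eb e \in S)]|.

Definition dG (S : {set V}) : nat := \sum_(v in S) #|[set e : E | incident v e]|.

Definition dF (F : {set E}) (S : {set V}) : nat :=
  \sum_(v in S) #|[set e in F | incident v e]|.

Definition phi (S : {set V}) : rat := (bdry S)%:R / (dG S)%:R.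

Definition k_edge_connected (k : nat) : Prop :=
  forall S : {set V}, S != set0 -> S != setT -> k <= bdry S.

Definition cross (F : {set E}) (P1 P2 : {set V}) : nat :=
  #|[set e in F | ((ea e \in P1) && (eb e \in P2)) || ((ea e \in P2) && (eb e \in P1))]|.

Definition split_of (P P1 P2 : {set V}) : bool :=
  [&& P1 != set0, P2 != set0, P1 :&: P2 == set0 & P1 :|: P2 == P].

(* "fewer than r edges" with r = k/4 rational: 4 * cross < k (exact) *)
Definition sparse_split (F : {set E}) (k : nat) (P P1 P2 : {set V}) : bool :=
  split_of P P1 P2 && (4 * cross F P1 P2 < k).

Definition quarter_connected (F : {set E}) (k : nat) (P : {set V}) : Prop :=
  forall P1 P2 : {set V}, split_of P P1 P2 -> k <= 4 * cross F P1 P2.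

Inductive reachable (F : {set E}) (k : nat) : {set {set V}} -> Prop :=
| reach_init : reachable F k [set setT]
| reach_step : forall (Pt : {set {set V}}) (P P1 P2 : {set V}),
    reachable F k Pt -> P \in Pt -> sparse_split F k P P1 P2 ->
    reachable F k ((Pt :\ P) :|: [set P1; P2]).

(* S_1..S_l (injectively indexed) is a natural decomposition of (V,F)
   into k/4-edge-connected components: a final state of the process. *)
Definition natural_decomposition (F : {set E}) (k l : nat) (S : 'I_l -> {set V}) : Prop :=
  injective S /\ reachable F k [set S i | i : 'I_l] /\
  (forall i, quarter_connected F k (S i)).

End Graph.

(* Main.v *)
Require Import Defs.
From HB Require Import structures.
From mathcomp Require Import all_boot all_order all_algebra.
From mathcomp Require Import zify ring lra.
Import Order.TTheory GRing.Theory Num.Theory.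
Set Implicit Arguments. Unset Strict Implicit.

Lemma sumb_card (T : finType) (A : {set T}) (P : pred T) :
  \sum_(x in A) (P x : nat) = #|[set x in A | P x]|.
Proof.
rewrite -sum1_card [in RHS]big_mkcond [in LHS]big_mkcond /=.
apply: eq_bigr => x _; rewrite inE; by case: (x \in A); case: (P x).
Qed.

Lemma sumb_cardT (T : finType) (P : pred T) :
  \sum_x (P x : nat) = #|[set x | P x]|.
Proof.
rewrite -sum1_card [in RHS]big_mkcond /=.
apply: eq_bigr => x _; rewrite inE; by case: (P x).
Qed.

Lemma sum_eq1 (T : finType) (A : {set T}) (a : T) :
  \sum_(v in A) ((a == v) : nat) = (a \in A).
Proof.
rewrite big_mkcond (bigD1 a) //= eqxx big1 ?addn0.
  by case: (a \in A).
by move=> v /negPf; rewrite eq_sym => ->; case: (v \in A).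
Qed.

Lemma sum_two (I : finType) (J : {set I}) (f g : pred I)
  (hf : forall i j, i \in J -> j \in J -> f i -> f j -> i = j)
  (hg : forall i j, i \in J -> j \in J -> g i -> g j -> i = j) :
  \sum_(i in J) ((f i != g i) : nat) =
  ([exists i in J, f i] != [exists i in J, g i]) +
  2 * ([exists i in J, f i] && [exists i in J, g i] && ~~ [exists i in J, f i && g i]).
Proof.
case: (boolP [exists i in J, f i]) => [/exists_inP [p pJ fp]|nf];
case: (boolP [exists i in J, g i]) => [/exists_inP [q qJ gq]|ng] /=.
- have fE : forall i, i \in J -> f i = (i == p).
    move=> i iJ; apply/idP/eqP => [fi|->//]; exact: hf.
  have gE : forall i, i \in J -> g i = (i == q).
    move=> i iJ; apply/idP/eqP => [gi|->//]; exact: hg.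
  case: (eqVneq p q) => [epq|npq].
  + subst q.
    have -> : [exists i in J, f i && g i] by apply/exists_inP; exists p; rewrite // fp gq.
    rewrite /= big1 // => i iJ; by rewrite fE // gE // eqxx.
  + have -> : [exists i in J, f i && g i] = false.
      apply/negbTE/exists_inP => -[i iJ /andP [fi gi]].
      by move: npq; rewrite -(hf _ _ iJ pJ fi fp) -(hg _ _ iJ qJ gi gq) eqxx.
    have gp : g p = false by rewrite gE // (negbTE npq).
    have fq : f q = false by rewrite fE // eq_sym (negbTE npq).
    rewrite (bigD1 p) //= fp gp /=.
    rewrite (bigD1 q) /=; last by rewrite qJ eq_sym.
    rewrite gq fq /= big1 // => i /andP [/andP [iJ ip] iq].
    by rewrite fE // gE // (negbTE ip) (negbTE iq).
- rewrite (bigD1 p) //= fp big1 /=.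
    have -> : g p = false by apply/negP => gp; move/exists_inP: ng; apply; exists p.
    by [].
  move=> i /andP [iJ ip].
  have -> : f i = false by apply/negP => fi; move: ip; rewrite (hf _ _ iJ pJ fi fp) eqxx.
  have -> : g i = false by apply/negP => gi; move/exists_inP: ng; apply; exists i.
  by [].
- rewrite (bigD1 q) //= gq big1 /=.
    have -> : f q = false by apply/negP => fq; move/exists_inP: nf; apply; exists q.
    by [].
  move=> i /andP [iJ iq].
  have -> : g i = false by apply/negP => gi; move: iq; rewrite (hg _ _ iJ qJ gi gq) eqxx.
  have -> : f i = false by apply/negP => fi; move/exists_inP: nf; apply; exists i.
  by [].
- rewrite big1 // => i iJ.
  have -> : f i = false by apply/negP => fi; move/exists_inP: nf; apply; exists i.
  have -> : g i = false by apply/negP => gi; move/exists_inP: ng; apply; exists i.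
  by [].
Qed.

Lemma arith (b1 b2 : bool) x x' c cr j k : b1 || b2 -> c <= (b1 && b2) * cr ->
  x' <= x + c -> 4*x <= j*k -> 4*cr < k -> 4*x' <= (b1 + b2 + j - 1)*k.
Proof.
case: b1; case: b2 => //= _; rewrite ?mul1n ?mul0n ?leqn0 => hc h1 h2 h3.
- rewrite add1n addSn subn1 /= mulSn; lia.
- rewrite add1n subn1 /=; lia.
- rewrite add1n subn1 /=; lia.
Qed.

Section Inv.
Variables (V E : finType) (ea eb : E -> V).

Definition Xset (F : {set E}) (J : {set {set V}}) :=
  [set e in F | [exists A in J, exists B in J, (A != B) && (ea e \in A) && (eb e \in B)]].

Lemma reach_inv F k Pt : reachable ea eb F k Pt ->
 [/\ (forall A B, A \in Pt -> B \in Pt -> A != B -> A :&: B = set0),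
     (forall A, A \in Pt -> A != set0 \/ A = setT) &
     (forall J : {set {set V}}, J \subset Pt -> 4 * #|Xset F J| <= (#|J| - 1) * k)].
Proof.
elim => {Pt} [|Pt P P1 P2 _ [hd hn hx] PP hs].
- split.
  + by move=> A B; rewrite !inE => /eqP -> /eqP ->; rewrite eqxx.
  + by move=> A; rewrite inE => /eqP ->; right.
  + move=> J sJ.
    suff -> : Xset F J = set0 by rewrite cards0.
    apply/setP => e; rewrite !inE; apply/negbTE/negP => /andP [_].
    move=> /exists_inP [A AJ /exists_inP [B BJ /andP [/andP [nAB _] _]]].
    move: (subsetP sJ A AJ) (subsetP sJ B BJ); rewrite !inE => /eqP hA /eqP hB.
    by move: nAB; rewrite hA hB eqxx.
- move: hs; rewrite /sparse_split /split_of.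
  case/andP => /and4P [n1 n2 /eqP d12 /eqP u12] hc.
  have s1 : P1 \subset P by rewrite -u12 subsetUl.
  have s2 : P2 \subset P by rewrite -u12 subsetUr.
  have ne1 : P1 != P.
    by apply/eqP => e1; move: n2; rewrite -d12 e1 (setIidPr s2) eqxx.
  have ne2 : P2 != P.
    by apply/eqP => e2; move: n1; rewrite -d12 e2 (setIidPl s1) eqxx.
  have ne12 : P1 != P2.
    by apply/eqP => e12; move: n1; rewrite -d12 -e12 setIid eqxx.
  have hdis : forall X B : {set V}, X \subset P -> B \in Pt -> B != P -> X :&: B = set0.
    move=> X B XP BP nBP; apply/eqP; rewrite -subset0.
    by rewrite -(hd P B) // ?setSI // eq_sym.
  have memN : forall A : {set V}, A \in (Pt :\ P) :|: [set P1; P2] =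
     [|| (A != P) && (A \in Pt), A == P1 | A == P2].
    by move=> A; rewrite !inE.
  have Pnot : P \notin (Pt :\ P) :|: [set P1; P2].
    by rewrite memN eqxx /= eq_sym (negbTE ne1) eq_sym (negbTE ne2).
  split.
  + move=> A B; rewrite !memN.
    case/or3P => [/andP [nAP AP]|/eqP->|/eqP->]; case/or3P => [/andP [nBP BP]|/eqP->|/eqP->] //.
    * by apply: hd.
    * by move=> _; rewrite setIC; apply: hdis.
    * by move=> _; rewrite setIC; apply: hdis.
    * by move=> _; apply: hdis.
    * by rewrite eqxx.
    * by move=> _; apply: hdis.
    * by move=> _; rewrite setIC.
    * by rewrite eqxx.
  + move=> A; rewrite memN; case/or3P => [/andP [_ AP]|/eqP->|/eqP->].
    * by apply: hn.
    * by left.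
    * by left.
  + move=> J' sJ'.
    have hJ' : forall A : {set V}, A \in J' -> A != P1 -> A != P2 -> (A != P) && (A \in Pt).
      move=> A AJ n1A n2A; move: (subsetP sJ' A AJ).
      by rewrite memN (negbTE n1A) (negbTE n2A) !orbF.
    have PJ' : P \notin J'.
      by apply/negP => PJ; move: (subsetP sJ' P PJ); rewrite (negbTE Pnot).
    case: (boolP ((P1 \in J') || (P2 \in J'))) => hb; last first.
      apply: (hx J'); apply/subsetP => A AJ.
      have n1A : A != P1 by apply/eqP => e; move: hb; rewrite -e AJ.
      have n2A : A != P2 by apply/eqP => e; move: hb; rewrite -e AJ orbT.
      by case/andP: (hJ' A AJ n1A n2A).
    set J0 := J' :\ P1 :\ P2.
    set J := P |: J0.
    have sJ : J \subset Pt.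
      apply/subsetP => A; rewrite !inE => /orP [/eqP -> //|/andP [n2A /andP [n1A AJ]]].
      by case/andP: (hJ' A AJ n1A n2A).
    have cJ : #|J| = #|J0|.+1.
      rewrite cardsU1; suff -> : P \notin J0 by [].
      by apply/negP; rewrite !inE => /andP [_ /andP [_ PJ]]; rewrite PJ in PJ'.
    have cJ' : #|J'| = (P1 \in J') + (P2 \in J') + #|J0|.
      rewrite (cardsD1 P1 J') (cardsD1 P2 (J' :\ P1)) !inE eq_sym (negbTE ne12) /=.
      by rewrite addnA.
    set b1 := P1 \in J' in hb cJ'.
    set b2 := P2 \in J' in hb cJ'.
    set C := [set e in F | b1 && b2 && (((ea e \in P1) && (eb e \in P2)) || ((ea e \in P2) && (eb e \in P1)))].
    have cC : #|C| <= (b1 && b2) * cross ea eb F P1 P2.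
      case: (boolP (b1 && b2)) => h.
      - rewrite mul1n /cross; apply: subset_leq_card; apply/subsetP => e.
        by rewrite /C !inE h /=.
      - rewrite mul0n leqn0 cards_eq0; apply/eqP/setP => e.
        by rewrite /C !inE (negbTE h) andbF.
    have key : Xset F J' \subset Xset F J :|: C.
      apply/subsetP => e; rewrite !inE => /andP [eF].
      move=> /exists_inP [A AJ /exists_inP [B BJ /andP [/andP [nAB eA] eB]]].
      rewrite eF /=.
      pose g X := if (X == P1) || (X == P2) then P else X.
      have gJ : forall X : {set V}, X \in J' -> g X \in J.
        move=> X XJ; rewrite /g; case: ifP => [_|/norP [n1X n2X]].
          by rewrite !inE eqxx.
        by rewrite !inE n1X n2X XJ orbT.
      have gsub : forall X : {set V}, X \subset g X.
        by move=> X; rewrite /g; case: ifP => // /orP [/eqP->|/eqP->].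
      case: (eqVneq (g A) (g B)) => hg; last first.
        apply/orP; left; apply/exists_inP; exists (g A); first exact: gJ.
        apply/exists_inP; exists (g B); first exact: gJ.
        by rewrite hg /= (subsetP (gsub A)) // (subsetP (gsub B)).
      apply/orP; right.
      move: hg; rewrite /g.
      case: (boolP ((A == P1) || (A == P2))) => hA; case: (boolP ((B == P1) || (B == P2))) => hB.
      * move=> _.
        have AJ1 := AJ; have BJ1 := BJ.
        case/orP: hA => /eqP eA'; case/orP: hB => /eqP eB'; subst A B.
        - by rewrite eqxx in nAB.
        - by rewrite /b1 /b2 AJ1 BJ1 eA eB.
        - by rewrite /b1 /b2 AJ1 BJ1 eA eB orbT.
        - by rewrite eqxx in nAB.
      * move=> ePB; move: PJ'; rewrite ePB BJ //.
      * move=> eAP; move: PJ'; rewrite -eAP AJ //.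
      * by move=> eAB; rewrite eAB eqxx in nAB.
    have := subset_leq_card key; rewrite cardsU => hk.
    have hk' : #|Xset F J'| <= #|Xset F J| + #|C|.
      by apply: (leq_trans hk); apply: leq_subr.
    rewrite cJ'.
    have hXJ' : 4 * #|Xset F J| <= #|J0| * k by move: (hx J sJ); rewrite cJ subn1.
    exact: (arith hb cC hk' hXJ' hc).
Qed.

End Inv.

Local Open Scope ring_scope.

Theorem mainTheorem12 (V E : finType) (ea eb : E -> V)
  (loopless : forall e, ea e != eb e) (k : nat)
  (hconn : k_edge_connected ea eb k) (F : {set E}) (l : nat)
  (S : 'I_l -> {set V}) (hdec : natural_decomposition ea eb F k S)
  (I : {set 'I_l}) :
  let SI := \bigcup_(i in I) S i in
  SI != set0 -> SI != setT ->
  (8 * dF ea eb F SI >= 7 * dG ea eb SI)%N ->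
  phi ea eb SI < 1 / 8 ->
  2 * phi ea eb SI <=
    (bdry ea eb SI)%:R / (\sum_(i in I) bdry ea eb (S i))%:R.
Proof.
move=> SI SI0 SIT hdF hphi.
case: hdec => [inj [hreach hq]].
have [hd hn hx] := reach_inv hreach.
have memS : forall i, S i \in [set S j | j : 'I_l] by move=> i; apply: imset_f.
have disjS : forall i j, i != j -> S i :&: S j = set0.
  move=> i j ij; apply: hd; rewrite ?memS //.
  by apply/eqP => e; move: ij; rewrite (inj _ _ e) eqxx.
have subSI : forall i, i \in I -> S i \subset SI.
  by move=> i iI; apply: (bigcup_sup i).
have memSI : forall v, (v \in SI) = [exists i in I, v \in S i].
  move=> v; apply/bigcupP/exists_inP => -[i iI vi]; by exists i.
have neS : forall i, i \in I -> S i != set0.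
  move=> i iI; case: (hn (S i) (memS i)) => // eT.
  by move: SIT; have := subSI i iI; rewrite eT => /(subset_trans) h; rewrite eqEsubset subsetT /= h.
pose b e := ((ea e \in SI) != (eb e \in SI)).
pose m e := (((ea e \in SI) : nat) + (eb e \in SI))%N.
pose x e := [exists i in I, ea e \in S i] && [exists i in I, eb e \in S i] &&
            ~~ [exists i in I, (ea e \in S i) && (eb e \in S i)].
pose c e := (\sum_(i in I) (((ea e \in S i) != (eb e \in S i)) : nat))%N.
have F1 : (\sum_(i in I) bdry ea eb (S i) = \sum_e c e)%N.
  rewrite /c exchange_big /=; apply: eq_bigr => i _.
  by rewrite /bdry -sumb_cardT.
have F2 : forall e, c e = (b e + 2 * x e)%N.
  move=> e; rewrite /c sum_two /b /x ?memSI //.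
  - move=> i j iI jI hi hj; apply/eqP; apply/negP => /negP ij.
    by have := disjS _ _ ij; move/setP/(_ (ea e)); rewrite !inE hi hj.
  - move=> i j iI jI hi hj; apply/eqP; apply/negP => /negP ij.
    by have := disjS _ _ ij; move/setP/(_ (eb e)); rewrite !inE hi hj.
have hinc : forall (A : {set V}) e,
    (\sum_(v in A) (incident ea eb v e : nat) = (ea e \in A) + (eb e \in A))%N.
  move=> A e; rewrite -!sum_eq1 -big_split /=; apply: eq_bigr => v _.
  rewrite /incident; case: (eqVneq (ea e) v) => [<-|] //=.
  by rewrite eq_sym (negbTE (loopless e)).
have F3 : dG ea eb SI = (\sum_e m e)%N.
  rewrite /dG; under eq_bigr => v _ do rewrite -sumb_cardT.
  by rewrite exchange_big /=; apply: eq_bigr => e _; rewrite hinc.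
have F3' : dF ea eb F SI = (\sum_(e in F) m e)%N.
  rewrite /dF; under eq_bigr => v _ do rewrite -sumb_card.
  by rewrite exchange_big /=; apply: eq_bigr => e _; rewrite hinc.
have F6 : bdry ea eb SI = (\sum_e b e)%N by rewrite /bdry -sumb_cardT.
have F4 : (4 * \sum_(e in F) x e <= (#|I| - 1) * k)%N.
  rewrite sumb_card.
  have sJ : S @: I \subset [set S j | j : 'I_l] by apply/subsetP => _ /imsetP [i _ ->]; apply: imset_f.
  apply: (leq_trans _ (leq_trans (hx _ sJ) _)); last first.
    by rewrite leq_mul2r leq_sub2r ?orbT // leq_imset_card.
  rewrite leq_mul2l; apply/orP; right; apply: subset_leq_card.
  apply/subsetP => e; rewrite !inE => /andP [eF].
  rewrite /x => /andP [/andP [/exists_inP [p pI hp] /exists_inP [q qI hq']] hn'].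
  rewrite eF /=; apply/exists_inP; exists (S p); first by apply: imset_f.
  apply/exists_inP; exists (S q); first by apply: imset_f.
  rewrite hp hq' !andbT; apply/eqP => epq; move/exists_inP: hn'; apply.
  by exists p => //; rewrite hp epq hq'.
have F5 : ((#|I| - 1) * k <= \sum_(i in I) bdry ea eb (S i))%N.
  apply: (leq_trans (leq_mul (leq_subr 1 _) (leqnn k))).
  rewrite -sum_nat_const; apply: leq_sum => i iI; apply: hconn; first exact: neS.
  apply/negP => /eqP eT; move: SIT; have := subSI i iI; rewrite eT.
  by move=> h; rewrite eqEsubset subsetT h.
have F7 : forall e, (b e <= m e)%N.
  by move=> e; rewrite /b /m; case: (ea e \in SI); case: (eb e \in SI).
have F8 : forall e, (2 * x e <= m e)%N.
  move=> e; rewrite /x /m !memSI.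
  by case: [exists i in I, ea e \in S i]; case: [exists i in I, eb e \in S i];
    case: [exists i in I, _ && _].
have hC : (\sum_e c e = \sum_e b e + 2 * (\sum_(e in F) x e + \sum_(e | e \notin F) x e))%N.
  rewrite (eq_bigr _ (fun e _ => F2 e)) big_split /= -big_distrr /=.
  by rewrite [X in (_ + 2 * X)%N](bigID (fun e => e \in F)) /=.
have hD : (\sum_e m e = \sum_(e in F) m e + \sum_(e | e \notin F) m e)%N.
  by rewrite (bigID (fun e => e \in F)).
have hXN : (2 * \sum_(e | e \notin F) x e <= \sum_(e | e \notin F) m e)%N.
  by rewrite big_distrr /=; apply: leq_sum => e _; apply: F8.
have hBD : (\sum_e b e <= \sum_e m e)%N by apply: leq_sum => e _; apply: F7.
rewrite F3 F3' in hdF.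
rewrite F1 in F5.
rewrite /phi F6 F1 F3 in hphi *.
set (C := (\sum_e c e)%N) in *.
set (B := (\sum_e b e)%N) in *.
set (D := (\sum_e m e)%N) in *.
set (XF := (\sum_(e in F) x e)%N) in *.
set (XN := (\sum_(e | e \notin F) x e)%N) in *.
set (DF := (\sum_(e in F) m e)%N) in *.
set (DN := (\sum_(e | e \notin F) m e)%N) in *.
set (K := ((#|I| - 1) * k)%N) in *.
case: (posnP B) => [->|Bpos]; first by rewrite !mul0r mulr0.
have Dpos : (0 < D)%N by apply: leq_trans hBD.
have Cpos : (0 < C)%N by rewrite hC; apply: leq_trans (leq_addr _ _).
have h8 : (8 * B < D)%N.
  have hD' : (0 : rat) < D%:R by rewrite ltr0n.
  move: hphi; rewrite ltr_pdivrMr // => h.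
  rewrite -(ltr_nat rat) natrM; lra.
have h2 : (2 * C <= D)%N by lia.
have hD' : (0 : rat) < D%:R by rewrite ltr0n.
have hC' : (0 : rat) < C%:R by rewrite ltr0n.
rewrite ler_pdivlMr //.
have -> : 2 * (B%:R / D%:R) * C%:R = (B%:R * (2 * C)%:R) / (D%:R : rat).
  by rewrite natrM; field; rewrite gt_eqF.
rewrite ler_pdivrMr // ler_wpM2l ?ler0n //.
by rewrite ler_nat.
Qed.
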